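(* For an unweighted cycle $\mathcal{C}_N$ ($N\geq3$), one has $h(1)=0$, \[ \overline{h}(1)=\begin{cases}\frac{N-1}{N},& N\text{ odd},\\ 1,& N\text{ even},\end{cases} \qquad h(k)=1-\overline{h}(k)=\frac{1}{\lfloor N/k\rfloor}\quad\text{for }2\leq k\leq N. \]
   Context: The unweighted cycle $\mathcal{C}_N$ has vertices $v_1,\ldots,v_N$ and edges exactly $\{v_i,v_{i+1}\}$ (indices mod $N$), each of weight $1$; $w_{uv}=0$ for non-edges, so every degree $d_u=2$. $|E(A,B)|:=\sum_{u\in A,v\in B}w_{uv}$, $\mathrm{vol}(A)=\sum_{u\in A}d_u$, $\overline{A}$ the complement. For nonempty $S$, $\phi(S)=|E(S,\overline{S})|/\mathrm{vol}(S)$; $h(k):=\min\max_{1\leq i\leq k}\phi(S_i)$ over all collections of $k$ nonempty pairwise disjoint vertex subsets. For disjoint $V_1,V_2$ with $V_1\cup V_2\neq\emptyset$, $\overline{\phi}(V_1,V_2)=2|E(V_1,V_2)|/\mathrm{vol}(V_1\cup V_2)$; $\overline{h}(k):=\max\min_{1\leq i\leq k}\overline{\phi}(V_{2i-1},V_{2i})$ over all collections of $k$ pairs $(V_1,V_2),\ldots,(V_{2k-1},V_{2k})$ of pairwise disjoint vertex subsets with $V_{2i-1}\cup V_{2i}\neq\emptyset$ for each $i$. *)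

(* Defs.v *)
From HB Require Import structures.
From mathcomp Require Import all_boot all_order all_algebra.
Set Implicit Arguments. Unset Strict Implicit. Unset Printing Implicit Defensive.
Import Order.TTheory GRing.Theory Num.Theory.
Local Open Scope ring_scope.

Section Cycle.
Variables (R : realFieldType) (N : nat).

Definition cyc_adj (u v : 'I_N) : bool :=
  (val v == (val u).+1 %% N)%N || (val u == (val v).+1 %% N)%N.

Definition cyc_w (u v : 'I_N) : R := if cyc_adj u v then 1 else 0.

Definition deg (u : 'I_N) : R := \sum_(v : 'I_N) cyc_w u v.

Definition cutE (A B : {set 'I_N}) : R := \sum_(u in A) \sum_(v in B) cyc_w u v.

Definition vol (A : {set 'I_N}) : R := \sum_(u in A) deg u.

Definition phi (Sc : {set 'I_N}) : R := cutE Sc (~: Sc) / vol Sc.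

Definition phibar (V1 V2 : {set 'I_N}) : R := 2 * cutE V1 V2 / vol (V1 :|: V2).

(* maximum / minimum of a nonempty list (value 0 on the empty list,
   never used below since all lists involved are nonempty) *)
Definition maxs (s : seq R) : R :=
  if s is x :: s' then foldr Num.max x s' else 0.
Definition mins (s : seq R) : R :=
  if s is x :: s' then foldr Num.min x s' else 0.

Definition adm_h (k : nat) (Sc : {ffun 'I_k -> {set 'I_N}}) : bool :=
  [forall i, Sc i != set0] &&
  [forall i, forall j, (i != j) ==> [disjoint Sc i & Sc j]].

(* k pairs (V_(2i-1), V_(2i)) = (V (i,false), V (i,true)) of pairwise
   disjoint subsets, with V_(2i-1) :|: V_(2i) nonempty *)
Definition adm_hbar (k : nat) (V : {ffun 'I_k * bool -> {set 'I_N}}) : bool :=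
  [forall i, (V (i, false) :|: V (i, true)) != set0] &&
  [forall a, forall b, (a != b) ==> [disjoint V a & V b]].

Definition h (k : nat) : R :=
  mins [seq maxs [seq phi (Sc i) | i <- enum 'I_k]
       | Sc : {ffun 'I_k -> {set 'I_N}} <- enum {ffun 'I_k -> {set 'I_N}} & adm_h Sc].

Definition hbar (k : nat) : R :=
  maxs [seq mins [seq phibar (V (i, false)) (V (i, true)) | i <- enum 'I_k]
       | V : {ffun 'I_k * bool -> {set 'I_N}} <- enum {ffun 'I_k * bool -> {set 'I_N}} & adm_hbar V].

End Cycle.

(* Main.v *)
Require Import Defs.
From HB Require Import structures.
From mathcomp Require Import all_boot all_order all_algebra.
From mathcomp Require Import zify ring lra.
Import Order.TTheory GRing.Theory Num.Theory.
Local Open Scope ring_scope.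
Set Implicit Arguments. Unset Strict Implicit. Unset Printing Implicit Defensive.

Section MinMax.
Variable R : realFieldType.
Lemma maxs_ge (s : seq R) x : x \in s -> x <= maxs s.
Proof.
case: s => [//|y s] /=; elim: s y => [|z s IH] y /=.
  by rewrite inE => /eqP ->.
rewrite !inE le_max => /or3P[xy|/eqP->|xs].
- by rewrite (IH y) ?orbT // inE xy.
- by rewrite lexx.
- by rewrite (IH y) ?orbT // inE xs orbT.
Qed.
Lemma maxs_le (s : seq R) a x0 : x0 \in s -> (forall x, x \in s -> x <= a) -> maxs s <= a.
Proof.
case: s => [//|y s] _ /=; elim: s y => [|z s IH] y /= H.
  by apply: H; rewrite inE.
rewrite ge_max H ?inE ?eqxx ?orbT //= IH // => x; rewrite inE => /orP[/eqP->|xs].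
  by apply: H; rewrite inE eqxx.
by apply: H; rewrite !inE xs !orbT.
Qed.
Lemma mins_le (s : seq R) x : x \in s -> mins s <= x.
Proof.
case: s => [//|y s] /=; elim: s y => [|z s IH] y /=.
  by rewrite inE => /eqP ->.
rewrite !inE ge_min => /or3P[xy|/eqP->|xs].
- by rewrite (IH y) ?orbT // inE xy.
- by rewrite lexx.
- by rewrite (IH y) ?orbT // inE xs orbT.
Qed.
Lemma mins_ge (s : seq R) a x0 : x0 \in s -> (forall x, x \in s -> a <= x) -> a <= mins s.
Proof.
case: s => [//|y s] _ /=; elim: s y => [|z s IH] y /= H.
  by apply: H; rewrite inE.
rewrite le_min H ?inE ?eqxx ?orbT //= IH // => x; rewrite inE => /orP[/eqP->|xs].
  by apply: H; rewrite inE eqxx.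
by apply: H; rewrite !inE xs !orbT.
Qed.
Lemma frac_le (p q r s : nat) : (0 < q)%N -> (0 < s)%N -> (p * s <= r * q)%N ->
  p%:R / q%:R <= r%:R / s%:R :> R.
Proof.
move=> q0 s0 H.
rewrite ler_pdivrMr ?ltr0n // mulrAC ler_pdivlMr ?ltr0n // -!natrM ler_nat.
lia.
Qed.
End MinMax.
Section Cyc.
Variables (R : realFieldType) (n : nat).
Hypothesis Hn : (2 <= n)%N.
Local Notation N := n.+1.
Implicit Types (A B S : {set 'I_N}) (u v : 'I_N).

Lemma valS u : nat_of_ord (ordS u) = if u.+1 == N then 0%N else u.+1.
Proof.
rewrite /=; case: eqP => [->|ne]; first by rewrite modnn.
by rewrite modn_small // ltn_neqAle ltn_ord andbT; apply/eqP.
Qed.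

Lemma adjE u v : cyc_adj u v = (v == ordS u) || (u == ordS v).
Proof. by []. Qed.

Lemma wE u v : cyc_w R u v = (v == ordS u)%:R + (u == ordS v)%:R.
Proof.
rewrite /cyc_w adjE.
have nb : ~~ ((v == ordS u) && (u == ordS v)).
  apply/negP => /andP[/eqP e1 /eqP e2].
  move: (congr1 (@nat_of_ord N) e1) (congr1 (@nat_of_ord N) e2); rewrite !valS.
  have := ltn_ord u; have := ltn_ord v.
  case: ifP => /eqP a; case: ifP => /eqP b; lia.
move: nb; case: (v == ordS u); case: (u == ordS v) => //= _.
- by rewrite addr0.
- by rewrite add0r.
- by rewrite addr0.
Qed.

Lemma sum_eq1 (B : {pred 'I_N}) x : \sum_(v in B) ((v == x)%:R : R) = (x \in B)%:R.
Proof.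
case: (boolP (x \in B)) => xB.
  rewrite (bigD1 x) //= eqxx big1 ?addr0 // => v /andP[_ /negbTE ->] //.
rewrite big1 // => v vB; case: eqP => // vx; subst; by rewrite vB in xB.
Qed.

Lemma sum_ind A (P : pred 'I_N) : \sum_(u in A) ((P u)%:R : R) = #|[set u in A | P u]|%:R.
Proof.
rewrite -sum1dep_card natr_sum big_mkcondr /=; apply: eq_bigr => u _.
by case: (P u).
Qed.

Definition cnt A B := #|[set u in A | ordS u \in B]|.

Lemma cutEE A B : cutE R A B = (cnt A B + cnt B A)%:R.
Proof.
rewrite /cutE natrD /cnt -!sum_ind.
transitivity (\sum_(u in A) \sum_(v in B) ((v == ordS u)%:R : R)
   + \sum_(u in A) \sum_(v in B) ((u == ordS v)%:R : R)).
  rewrite -big_split; apply: eq_bigr => u _; rewrite -big_split; apply: eq_bigr => v _.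
  exact: wE.
congr (_ + _); first by apply: eq_bigr => u _; rewrite sum_eq1.
by rewrite exchange_big; apply: eq_bigr => v _; rewrite sum_eq1.
Qed.

Lemma degE u : deg R u = 2.
Proof.
rewrite /deg; under eq_bigr do rewrite wE.
rewrite big_split /=.
have -> : \sum_(i < N) ((u == ordS i)%:R : R) = \sum_(i < N) ((i == ord_pred u)%:R : R).
  apply: eq_bigr => i _; congr (_%:R).
  by rewrite eq_sym (can2_eq (@ordSK N) (@ord_predK N)).
by rewrite !(sum_eq1 predT).
Qed.

Lemma volE A : vol R A = (2 * #|A|)%:R.
Proof.
rewrite /vol; under eq_bigr do rewrite degE.
by rewrite sumr_const natrM mulr_natr; reflexivity.
Qed.

Lemma phiE S : phi R S = (cnt S (~: S) + cnt (~: S) S)%:R / (2 * #|S|)%:R.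
Proof. by rewrite /phi cutEE volE. Qed.

Lemma phibarE A B : phibar R A B = (2 * (cnt A B + cnt B A))%:R / (2 * #|A :|: B|)%:R.
Proof. rewrite /phibar (cutEE A B) volE !natrM; reflexivity. Qed.

Lemma val_iter (a : 'I_N) j : nat_of_ord (iter j (@ordS N) a) = ((a + j) %% N)%N.
Proof.
elim: j => [|j IH] /=; first by rewrite addn0 modn_small.
by rewrite IH addnS -[(_ %% N).+1]addn1 modnDml addn1.
Qed.

Lemma iter_all (a v : 'I_N) : exists j, v = iter j (@ordS N) a.
Proof.
exists (v + (N - a))%N; apply: val_inj => /=; rewrite val_iter.
rewrite addnCA subnKC; last exact: ltnW.
by rewrite modnDr modn_small.
Qed.

Lemma closure A a : a \in A -> (forall u, u \in A -> ordS u \in A) -> forall v, v \in A.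
Proof.
move=> aA H v; have [j ->] := iter_all a v.
by elim: j => [|j IH] //=; apply: H.
Qed.

Lemma cnt_le A B : (cnt A B <= #|A|)%N.
Proof. by apply: subset_leq_card; apply/subsetP => u; rewrite inE => /andP[]. Qed.

Lemma cnt_ge1 S : S != set0 -> S != setT -> (1 <= cnt S (~: S))%N.
Proof.
move=> S0 ST; rewrite lt0n cards_eq0; apply/negP => /eqP E.
case/set0Pn: S0 => a aS; move/negP: ST; apply; apply/eqP/setP => v.
rewrite inE; apply: (closure aS) => u uS; case: (boolP (ordS u \in S)) => // nS.
have : u \in [set u in S | ordS u \in ~: S] by rewrite inE uS inE nS.
by rewrite E inE.
Qed.

Lemma cut_ge2 S : S != set0 -> S != setT -> (2 <= cnt S (~: S) + cnt (~: S) S)%N.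
Proof.
move=> S0 ST; have h1 := cnt_ge1 S0 ST.
have h2 : (1 <= cnt (~: S) (~: ~: S))%N.
  apply: cnt_ge1; first by apply: contra ST => /eqP E; rewrite -[S]setCK E setC0.
  by apply: contra S0 => /eqP E; rewrite -[S]setCK E setCT.
rewrite setCK in h2; lia.
Qed.

Lemma cnt_self_lt A : A != set0 -> A != setT -> (cnt A A < #|A|)%N.
Proof.
move=> A0 AT; rewrite ltn_neqAle cnt_le andbT; apply/negP => /eqP E.
have sub : [set u in A | ordS u \in A] \subset A by apply/subsetP => u; rewrite inE => /andP[].
have EA : [set u in A | ordS u \in A] = A.
  by apply/eqP; rewrite eqEcard sub /= -E /cnt.
case/set0Pn: A0 => a aA; move/negP: AT; apply; apply/eqP/setP => v.
rewrite inE; apply: (closure aA) => u uA.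
by move: uA; rewrite -{1}EA inE => /andP[].
Qed.

Lemma cnt_cap A B : [disjoint A & B] -> (cnt A B + cnt B A <= cnt (A :|: B) (A :|: B))%N.
Proof.
move=> dAB; rewrite /cnt.
set S1 := [set u in A | ordS u \in B]; set S2 := [set u in B | ordS u \in A].
have d12 : S1 :&: S2 = set0.
  apply/setP => u; rewrite !inE; apply/negP => /andP[/andP[uA _] /andP[uB _]].
  by rewrite (disjointFr dAB uA) in uB.
have -> : (#|S1| + #|S2| = #|S1 :|: S2|)%N by rewrite cardsU d12 cards0 subn0.
apply: subset_leq_card; apply/subsetP => u; rewrite !inE.
by case/orP => /andP[-> ->]; rewrite ?orbT.
Qed.

Lemma card_itv a b : (b <= N)%N -> #|[set u : 'I_N | (a <= u < b)%N]| = (b - a)%N.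
Proof.
move=> bN; rewrite -sum1dep_card big_mkcond /=.
rewrite -(big_mkord xpredT (fun j => if (a <= j < b)%N then 1%N else 0%N)).
rewrite (big_cat_nat (leq0n b) bN) /= [X in (_ + X)%N]big1_seq ?addn0; last first.
  by move=> j /andP[_]; rewrite mem_iota => /andP[bj _]; rewrite ltnNge bj andbF.
case: (leqP a b) => ab; last first.
  rewrite big1_seq; first by apply/esym/eqP; rewrite subn_eq0 ltnW.
  by move=> j /andP[_]; rewrite mem_iota => /andP[_ jb]; case: ifP => // /andP[]; lia.
rewrite (big_cat_nat (leq0n a) ab) /= big1_seq ?add0n; last first.
  by move=> j /andP[_]; rewrite mem_iota => /andP[_ jb]; case: ifP => // /andP[]; lia.
rewrite (eq_big_nat _ _ (F2 := fun _ => 1%N)); first by rewrite sum_nat_const_nat muln1.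
by move=> j /andP[aj jb]; rewrite aj jb.
Qed.

Lemma small_exists k (W : 'I_k -> {set 'I_N}) : (0 < k)%N ->
  (forall i j, i != j -> [disjoint W i & W j]) -> exists i, (#|W i| <= N %/ k)%N.
Proof.
move=> k0 dW.
have sumle : (\sum_(i < k) #|W i| <= N)%N.
  have -> : (\sum_(i < k) #|W i| = \sum_(u : 'I_N) \sum_(i < k) (u \in W i))%N.
    rewrite exchange_big /=; apply: eq_bigr => i _.
    rewrite -sum1_card big_mkcond /=; apply: eq_bigr => u _; by case: (u \in W i).
  apply: (@leq_trans (\sum_(u : 'I_N) 1)%N); last by rewrite sum1_card card_ord.
  apply: leq_sum => u _.
  case: (boolP [exists i, u \in W i]) => [/existsP[i ui]|].
    rewrite (bigD1 i) //= ui big1 ?addn0 // => j ji.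
    by rewrite (disjointFr (dW i j _) ui) // eq_sym.
  by rewrite negb_exists => /forallP H; rewrite big1 // => i _; rewrite (negbTE (H i)).
case: (boolP [exists i, #|W i| <= N %/ k]%N) => [/existsP[i Hi]|]; first by exists i.
rewrite negb_exists => /forallP H; exfalso.
have : (\sum_(i < k) (N %/ k).+1 <= \sum_(i < k) #|W i|)%N.
  by apply: leq_sum => i _; rewrite ltnNge H.
rewrite sum_nat_const card_ord => H2.
have : (N %/ k < (N %/ k).+1)%N by [].
rewrite ltn_divLR // => H3; lia.
Qed.

Lemma cnt_union (V1 V2 : {set 'I_N}) : [disjoint V1 & V2] ->
  (cnt V1 V2 + cnt V2 V1 = #|[set u in V1 | ordS u \in V2] :|: [set u in V2 | ordS u \in V1]|)%N.
Proof.
move=> d; rewrite cardsU.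
have -> : [set u in V1 | ordS u \in V2] :&: [set u in V2 | ordS u \in V1] = set0.
  apply/setP => u; rewrite !inE; apply/negP => /andP[/andP[uA _] /andP[uB _]].
  by rewrite (disjointFr d uA) in uB.
by rewrite cards0 subn0.
Qed.

Lemma cut_odd (V1 V2 : {set 'I_N}) : odd N -> [disjoint V1 & V2] -> (cnt V1 V2 + cnt V2 V1 < N)%N.
Proof.
move=> oN d; rewrite ltn_neqAle; apply/andP; split; last first.
  apply: leq_trans (cnt_cap d) _; apply: leq_trans (cnt_le _ _) _.
  by apply: leq_trans (max_card _) _; rewrite card_ord.
apply/negP => /eqP E.
have ET : [set u in V1 | ordS u \in V2] :|: [set u in V2 | ordS u \in V1] = setT.
  apply/eqP; rewrite eqEcard subsetT /= cardsT card_ord -(cnt_union d) E //.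
have flip u : (ordS u \in V1) = ~~ (u \in V1).
  have : u \in [set: 'I_N] by rewrite inE.
  rewrite -ET !inE; case: (boolP (u \in V1)) => uV1 /=.
    case/orP => [uV2|/andP[uV2 _]]; first by rewrite (disjointFl d uV2).
    by rewrite (disjointFr d uV1) in uV2.
  by case/andP.
have it j : (iter j (@ordS N) ord0 \in V1) = odd j (+) (ord0 \in V1).
  elim: j => [|j IH] //=; rewrite flip IH.
  by case: (odd j); case: (_ \in V1).
have iN : iter N (@ordS N) ord0 = ord0.
  by apply: val_inj; rewrite [LHS]val_iter add0n modnn.
move: (it N); rewrite iN oN; by case: (_ \in V1).
Qed.

Definition arc (a m : nat) := [set u : 'I_N | (a <= u < a + m)%N].

Lemma card_arc a m : (a + m <= N)%N -> #|arc a m| = m.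
Proof. by move=> H; rewrite card_itv // addKn. Qed.

Lemma cnt_arc1 a m : (a + m <= N)%N -> (cnt (arc a m) (~: arc a m) <= 1)%N.
Proof.
move=> H; apply/card_le1_eqP => u v; rewrite !inE => /andP[/andP[u1 u2] nu] /andP[/andP[v1 v2] nv].
apply: val_inj => /=.
move: nu nv; have := valS u; have := valS v; have := ltn_ord u; have := ltn_ord v.
case: ifP => /eqP ev; case: ifP => /eqP eu => lv lu -> ->.
- lia.
- case/nandP; rewrite -ltnNge; lia.
- move=> _; case/nandP; rewrite -ltnNge; lia.
- case/nandP; rewrite -ltnNge; [lia|]; move=> h1; case/nandP; rewrite -ltnNge; lia.
Qed.

Lemma cnt_arc2 a m : (a + m <= N)%N -> (cnt (~: arc a m) (arc a m) <= 1)%N.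
Proof.
move=> H.
have key w : w \in [set u in ~: arc a m | ordS u \in arc a m] -> nat_of_ord (ordS w) = a.
  rewrite !inE => /andP[nw /andP[w1 w2]]; move: nw w1 w2.
  have := valS w; have := ltn_ord w.
  case: ifP => /eqP ew lw ->; first lia.
  case/nandP; rewrite -ltnNge; lia.
apply/card_le1_eqP => u v uS vS; apply: ordS_inj; apply: val_inj.
by move: (key u uS) (key v vS) => /= -> ->.
Qed.

Lemma phi_lower S m : S != set0 -> S != setT -> (#|S| <= m)%N -> 1%:R / m%:R <= phi R S.
Proof.
move=> S0 ST Sm; rewrite phiE; have c2 := cut_ge2 S0 ST.
have s0 : (0 < #|S|)%N by rewrite card_gt0.
apply: frac_le; nia.
Qed.

Lemma phi_arc a m : (a + m <= N)%N -> (0 < m)%N -> phi R (arc a m) <= 1%:R / m%:R.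
Proof.
move=> H m0; rewrite phiE card_arc //.
have := cnt_arc1 H; have := cnt_arc2 H => h1 h2.
apply: frac_le; try nia. rewrite mul1n leq_mul //; exact: (leq_add h2 h1).
Qed.

Lemma phibar_le (V1 V2 : {set 'I_N}) m :
  (cnt V1 V2 + cnt V2 V1 + 1 <= #|V1 :|: V2|)%N -> (#|V1 :|: V2| <= m)%N ->
  phibar R V1 V2 <= (m - 1)%:R / m%:R.
Proof.
rewrite phibarE => h1 h2; apply: frac_le; nia.
Qed.

Lemma phibar_le1 (V1 V2 : {set 'I_N}) : [disjoint V1 & V2] -> V1 :|: V2 != set0 ->
  phibar R V1 V2 <= 1%:R / 1%:R.
Proof.
move=> d U0; rewrite phibarE; have := cnt_cap d; have := cnt_le (V1 :|: V2) (V1 :|: V2).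
have : (0 < #|V1 :|: V2|)%N by rewrite card_gt0.
move=> h0 h1 h2; apply: frac_le; nia.
Qed.

Definition Vs (a m : nat) (b : bool) := [set u : 'I_N | (a <= u < a + m)%N && (odd u == b)].

Lemma Vs_union a m : Vs a m false :|: Vs a m true = arc a m.
Proof. by apply/setP => u; rewrite !inE; case: (odd u); rewrite ?andbF ?andbT ?orbF. Qed.

Lemma Vs_disj a m : [disjoint Vs a m false & Vs a m true].
Proof.
by rewrite -setI_eq0; apply/eqP/setP => u; rewrite !inE; case: (odd u); rewrite ?andbF.
Qed.

Lemma Vs_cnt a m : (a + m <= N)%N ->
  (m - 1 <= cnt (Vs a m false) (Vs a m true) + cnt (Vs a m true) (Vs a m false))%N.
Proof.
move=> H; rewrite (cnt_union (Vs_disj a m)).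
have -> : (m - 1 = (a + (m - 1)) - a)%N by rewrite addKn.
rewrite -card_itv; last lia.
apply: subset_leq_card; apply/subsetP => u; rewrite !inE => /andP[u1 u2].
have vS : nat_of_ord (ordS u) = u.+1.
  rewrite valS; case: ifP => /eqP // e; lia.
rewrite vS /=; have -> : (a <= u < a + m)%N by lia.
have -> : (a <= u.+1 < a + m)%N by lia.
by case: (odd u).
Qed.

Lemma phibar_Vs a m : (a + m <= N)%N -> (0 < m)%N ->
  (m - 1)%:R / m%:R <= phibar R (Vs a m false) (Vs a m true).
Proof.
move=> H m0; rewrite phibarE Vs_union card_arc //; have := Vs_cnt H => h.
apply: frac_le; nia.
Qed.

Lemma Vs_full : ~~ odd N -> (N <= cnt (Vs 0 N false) (Vs 0 N true) + cnt (Vs 0 N true) (Vs 0 N false))%N.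
Proof.
move=> eN; rewrite (cnt_union (Vs_disj 0 N)).
apply: (@leq_trans #|[set: 'I_N]|); first by rewrite cardsT card_ord.
apply: subset_leq_card; apply/subsetP => u _; rewrite !inE !add0n !leq0n !ltn_ord /=.
have := valS u; case: ifP => /eqP e /= ->.
  have h : odd u.+1 = odd N by rewrite e.
  have ou : odd u by move: eN; rewrite -h /=; case: (odd u).
  by rewrite ou.
by rewrite /=; case: (odd u).
Qed.

Lemma phibar_full : ~~ odd N -> 1%:R / 1%:R <= phibar R (Vs 0 N false) (Vs 0 N true).
Proof.
move=> eN; rewrite phibarE Vs_union card_arc //; have := Vs_full eN => h.
apply: frac_le; nia.
Qed.

Lemma adm_h_ne k (Sc : {ffun 'I_k -> {set 'I_N}}) : adm_h Sc -> forall i, Sc i != set0.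
Proof. by case/andP => /forallP H _. Qed.

Lemma adm_h_dj k (Sc : {ffun 'I_k -> {set 'I_N}}) : adm_h Sc ->
  forall i j, i != j -> [disjoint Sc i & Sc j].
Proof. by case/andP => _ /forallP H i j ij; move: (H i) => /forallP /(_ j) /implyP; apply. Qed.

Lemma adm_hbar_ne k (V : {ffun 'I_k * bool -> {set 'I_N}}) : adm_hbar V ->
  forall i, V (i, false) :|: V (i, true) != set0.
Proof. by case/andP => /forallP H _. Qed.

Lemma adm_hbar_dj k (V : {ffun 'I_k * bool -> {set 'I_N}}) : adm_hbar V ->
  forall a b, a != b -> [disjoint V a & V b].
Proof. by case/andP => _ /forallP H i j ij; move: (H i) => /forallP /(_ j) /implyP; apply. Qed.

Lemma arc_disj (i j m : nat) : i != j -> (0 < m)%N -> [disjoint arc (i * m) m & arc (j * m) m].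
Proof.
move=> ij m0; rewrite -setI_eq0; apply/eqP/setP => u; rewrite !inE.
apply/negP => /andP[/andP[a1 a2] /andP[b1 b2]].
have h1 : (i * m < j.+1 * m)%N by rewrite mulSn; lia.
have h2 : (j * m < i.+1 * m)%N by rewrite mulSn; lia.
rewrite ltn_pmul2r // in h1; rewrite ltn_pmul2r // in h2.
move/eqP: ij; lia.
Qed.

Lemma exists_other k (i : 'I_k) : (1 < k)%N -> exists j : 'I_k, j != i.
Proof.
move=> k1; case: (eqVneq (nat_of_ord i) 0%N) => e.
  by exists (Ordinal k1); apply/eqP => /(congr1 (@nat_of_ord k)) /=; lia.
by exists (Ordinal (ltnW k1)); apply/eqP => /(congr1 (@nat_of_ord k)) /=; lia.
Qed.

Lemma ne_setT k (Sc : 'I_k -> {set 'I_N}) i j : j != i -> Sc j != set0 ->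
  [disjoint Sc j & Sc i] -> Sc i != setT.
Proof.
move=> ji /set0Pn[x xj] d; apply/negP => /eqP E.
by move: (disjointFr d xj); rewrite E inE.
Qed.

Definition ScF k m := [ffun i : 'I_k => arc (i * m) m].
Definition VF k m := [ffun p : 'I_k * bool => Vs (p.1 * m) m p.2].

Lemma arc_fit k m (i : 'I_k) : (k * m <= N)%N -> (i * m + m <= N)%N.
Proof.
move=> H; apply: leq_trans H; rewrite -mulSnr leq_mul2r ltn_ord orbT //.
Qed.

Lemma adm_ScF k m : (0 < m)%N -> (k * m <= N)%N -> adm_h (ScF k m).
Proof.
move=> m0 H; apply/andP; split.
  by apply/forallP => i; rewrite ffunE -card_gt0 card_arc // arc_fit.
apply/forallP => i; apply/forallP => j; apply/implyP => ij; rewrite !ffunE.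
by apply: arc_disj.
Qed.

Lemma adm_VF k m : (0 < m)%N -> (k * m <= N)%N -> adm_hbar (VF k m).
Proof.
move=> m0 H; apply/andP; split.
  by apply/forallP => i; rewrite !ffunE /= Vs_union -card_gt0 card_arc // arc_fit.
apply/forallP => [[i b]]; apply/forallP => [[j c]]; apply/implyP => ij; rewrite !ffunE /=.
case: (eqVneq i j) => [eij|nij].
  subst j; have bc : b != c by apply: contra ij => /eqP ->.
  rewrite -setI_eq0; apply/eqP/setP => u; rewrite !inE.
  by move: bc; clear ij; case: b; case: c => //= _; case: (odd u); rewrite ?andbF.
have nij' : (nat_of_ord i) != j by apply: contra nij => /eqP e; apply/eqP/val_inj.
apply: disjointW (arc_disj (i:=i) (j:=j) (m:=m) nij' m0).
- by apply/subsetP => u; rewrite !inE => /andP[-> _].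
- by apply/subsetP => u; rewrite !inE => /andP[-> _].
Qed.

Lemma in_hlist k (Sc : {ffun 'I_k -> {set 'I_N}}) : adm_h Sc ->
  maxs [seq phi R (Sc i) | i <- enum 'I_k] \in
  [seq maxs [seq phi R (Sc i) | i <- enum 'I_k]
       | Sc : {ffun 'I_k -> {set 'I_N}} <- enum {ffun 'I_k -> {set 'I_N}} & adm_h Sc].
Proof. by move=> a; apply: map_f; rewrite mem_filter a mem_enum. Qed.

Lemma in_hbarlist k (V : {ffun 'I_k * bool -> {set 'I_N}}) : adm_hbar V ->
  mins [seq phibar R (V (i, false)) (V (i, true)) | i <- enum 'I_k] \in
  [seq mins [seq phibar R (V (i, false)) (V (i, true)) | i <- enum 'I_k]
       | V : {ffun 'I_k * bool -> {set 'I_N}} <- enum {ffun 'I_k * bool -> {set 'I_N}} & adm_hbar V].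
Proof. by move=> a; apply: map_f; rewrite mem_filter a mem_enum. Qed.

Lemma h_k k : (2 <= k <= N)%N -> h R N k = 1 / (N %/ k)%:R.
Proof.
case/andP=> k2 kN; set m := (N %/ k)%N.
have k0 : (0 < k)%N by lia.
have m0 : (0 < m)%N by rewrite divn_gt0.
have mk : (k * m <= N)%N by rewrite mulnC leq_divM.
have i0 : Ordinal k0 \in enum 'I_k by rewrite mem_enum.
apply/le_anti/andP; split.
  apply: le_trans (mins_le (in_hlist (adm_ScF m0 mk))) _.
  apply: (maxs_le (map_f _ i0)) => x /mapP[i _ ->]; rewrite ffunE.
  exact: phi_arc (arc_fit _ mk) m0.
apply: (mins_ge (in_hlist (adm_ScF m0 mk))) => x /mapP[Sc]; rewrite mem_filter => /andP[a _] ->.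
have [i Hi] := small_exists k0 (adm_h_dj a).
apply: le_trans (maxs_ge (map_f _ (mem_enum _ i))).
have [j ji] := exists_other i k2.
apply: phi_lower Hi; first exact: adm_h_ne.
exact: (ne_setT ji (adm_h_ne a j) (adm_h_dj a ji)).
Qed.

Lemma hbar_k k : (2 <= k <= N)%N -> hbar R N k = ((N %/ k) - 1)%:R / (N %/ k)%:R.
Proof.
case/andP=> k2 kN; set m := (N %/ k)%N.
have k0 : (0 < k)%N by lia.
have m0 : (0 < m)%N by rewrite divn_gt0.
have mk : (k * m <= N)%N by rewrite mulnC leq_divM.
have i0 : Ordinal k0 \in enum 'I_k by rewrite mem_enum.
apply/le_anti/andP; split; last first.
  apply: le_trans _ (maxs_ge (in_hbarlist (adm_VF m0 mk))).
  apply: (mins_ge (map_f _ i0)) => x /mapP[i _ ->]; rewrite !ffunE /=.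
  exact: phibar_Vs (arc_fit _ mk) m0.
apply: (maxs_le (in_hbarlist (adm_VF m0 mk))) => x /mapP[V]; rewrite mem_filter => /andP[a _] ->.
set U := fun i => V (i, false) :|: V (i, true).
have dU : forall i j, i != j -> [disjoint U i & U j].
  move=> i j ij; rewrite -setI_eq0; apply/eqP/setP => u; rewrite !inE.
  apply/negP => /andP[ui uj].
  have H : forall b c, u \in V (i, b) -> u \in V (j, c) -> False.
    move=> b c h1 h2; have d := adm_hbar_dj a (a:=(i, b)) (b:=(j, c)).
    rewrite (disjointFr (d _) h1) in h2 => //.
    by apply: contra ij => /eqP [->].
  by case/orP: ui => h1; case/orP: uj => h2; apply: (H _ _ h1 h2).
have [i Hi] := small_exists k0 dU.
apply: le_trans (mins_le (map_f _ (mem_enum _ i))) _.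
have Hi2 := Hi.
apply: phibar_le Hi.
have d : [disjoint V (i, false) & V (i, true)] by apply: (adm_hbar_dj a); rewrite xpair_eqE andbF.
rewrite addn1; apply: leq_ltn_trans (cnt_cap d) _.
apply: cnt_self_lt; first exact: (adm_hbar_ne a).
apply/negP => /eqP E; move: Hi2; rewrite /U E cardsT card_ord.
have : (m * 2 <= m * k)%N by rewrite leq_mul2l k2 orbT.
lia.
Qed.

Lemma h_1 : h R N 1 = 0.
Proof.
set Sc := [ffun i : 'I_1 => [set: 'I_N]].
have a : adm_h Sc.
  apply/andP; split.
    by apply/forallP => i; rewrite ffunE; apply/set0Pn; exists ord0; rewrite inE.
  by apply/forallP => i; apply/forallP => j; rewrite !ord1 eqxx.
apply/le_anti/andP; split.
  apply: le_trans (mins_le (in_hlist a)) _.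
  apply: (maxs_le (map_f _ (mem_enum _ ord0))) => x /mapP[i _ ->].
  rewrite ffunE phiE setCT.
  have -> : cnt [set: 'I_N] set0 = 0%N by apply/eqP; rewrite cards_eq0; apply/eqP/setP => u; rewrite !inE.
  have -> : cnt set0 [set: 'I_N] = 0%N by apply/eqP; rewrite cards_eq0; apply/eqP/setP => u; rewrite !inE.
  by rewrite mul0r.
apply: (mins_ge (in_hlist a)) => x /mapP[Sc']; rewrite mem_filter => /andP[a' _] ->.
apply: le_trans (maxs_ge (map_f _ (mem_enum _ ord0))).
by rewrite phiE divr_ge0 ?ler0n.
Qed.

Lemma hbar_1 : hbar R N 1 = if odd N then (N%:R - 1) / N%:R else 1.
Proof.
have m0 : (0 < N)%N by [].
have mk : (1 * N <= N)%N by rewrite mul1n.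
have VE : forall b, VF 1 N (ord0, b) = Vs 0 N b by move=> b; rewrite ffunE /= mul0n.
have lo : forall V : {ffun 'I_1 * bool -> {set 'I_N}}, adm_hbar V ->
    mins [seq phibar R (V (i, false)) (V (i, true)) | i <- enum 'I_1] =
    phibar R (V (ord0, false)) (V (ord0, true)).
  move=> V _; rewrite enum_ordSl /=.
  have -> : enum 'I_0 = [::] by apply: size0nil; rewrite size_enum_ord.
  by [].
have up : hbar R N 1 >= phibar R (Vs 0 N false) (Vs 0 N true).
  apply: le_trans _ (maxs_ge (in_hbarlist (adm_VF m0 mk))).
  by rewrite lo ?adm_VF // !VE.
case: ifP => oN.
  apply/le_anti/andP; split; last first.
    apply: le_trans up.
    have -> : N%:R - 1 = (N - 1)%:R :> R by rewrite natrB.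
    exact: (phibar_Vs (a:=0) (leqnn N) m0).
  apply: (maxs_le (in_hbarlist (adm_VF m0 mk))) => x /mapP[V]; rewrite mem_filter => /andP[a _] ->.
  rewrite lo //.
  have d : [disjoint V (ord0, false) & V (ord0, true)] by apply: (adm_hbar_dj a); rewrite xpair_eqE andbF.
  have -> : N%:R - 1 = (N - 1)%:R :> R by rewrite natrB.
  apply: phibar_le; last by apply: leq_trans (max_card _) _; rewrite card_ord.
  case: (eqVneq (V (ord0, false) :|: V (ord0, true)) setT) => [E|nT].
    by rewrite E cardsT card_ord addn1; apply: cut_odd.
  rewrite addn1; apply: leq_ltn_trans (cnt_cap d) _.
  by apply: cnt_self_lt => //; apply: (adm_hbar_ne a).
apply/le_anti/andP; split; last first.
  apply: le_trans up; have := phibar_full (negbT oN).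
  by rewrite divr1.
apply: (maxs_le (in_hbarlist (adm_VF m0 mk))) => x /mapP[V]; rewrite mem_filter => /andP[a _] ->.
rewrite lo //; have := phibar_le1 _ (adm_hbar_ne a ord0); rewrite divr1; apply.
by apply: (adm_hbar_dj a); rewrite xpair_eqE andbF.
Qed.
End Cyc.

Theorem proposition7p3 (R : realFieldType) (N : nat) :
  (3 <= N)%N ->
  h R N 1 = 0 /\
  hbar R N 1 = (if odd N then (N%:R - 1) / N%:R else 1) /\
  (forall k : nat, (2 <= k <= N)%N ->
     h R N k = 1 - hbar R N k /\ 1 - hbar R N k = 1 / (N %/ k)%:R).
Proof.
case: N => [//|n] H3.
have Hn : (2 <= n)%N by [].
split; first exact: (h_1 R Hn).
split; first exact: (hbar_1 R Hn).
move=> k Hk; rewrite (h_k R Hn Hk) (hbar_k R Hn Hk).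
set m := (n.+1 %/ k)%N.
have m0 : (0 < m)%N by rewrite divn_gt0; case/andP: Hk => a b; lia.
suff E : 1 - (m - 1)%:R / m%:R = 1 / m%:R :> R by split.
have mR : m%:R != 0 :> R by rewrite pnatr_eq0 -lt0n.
rewrite natrB //; field; exact: mR.
Qed.
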